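(* Let $0<a<1$ and let $\tau_1,\tau_2:[0,a]\to[0,1]$ be continuously differentiable, strictly increasing maps with $\tau_i(0)=0$, $\tau_i(a)=1$, $\tau_1(x)\le x/a$ and $\tau_2(x)\ge x/a$, such that $\tau_{21}=\tau_2^{-1}\circ\tau_1:[0,a]\to[0,a]$ is continuously differentiable and satisfies $\tau_{21}(x)<x$ for $x\in(0,a)$. Let $0<\widehat a<a$ and $\sigma<1$ be such that $\tau_{21}'(x)\le\sigma$ for $x\in[0,\widehat a]$, and let $p$ be the unique bounded solution on $[0,\widehat a]$ of $$p(x)=p(\tau_{21}(x))\,\tau_{21}'(x)-\left[\tau_{21}'(x)-a\,\tau_1'(x)\right].\qquad(\ast)$$ Then $p$ extends uniquely to a function on $[0,a)$ satisfying $(\ast)$ for all $x\in[0,a)$, and this extension is given for every $x\in[0,a)$ by the convergent series $$p(x)=\sum_{n=0}^\infty B(\tau_{21}^n(x))\,(\tau_{21}^n)'(x),\qquad B(x)=a\,\tau_1'(x)-\tau_{21}'(x).$$ In particular, the resulting function on $[0,a)$ does not depend on the choice of $\widehat a$. *)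

(* Defs.v *)
From Stdlib Require Import Reals.
From Coquelicot Require Import Coquelicot.
Open Scope R_scope.

Fixpoint iterf (n : nat) (f : R -> R) (x : R) : R :=
  match n with
  | O => x
  | S k => f (iterf k f x)
  end.

Definition has_derivative_on (f f' : R -> R) (lo hi : R) : Prop :=
  forall x, lo <= x <= hi ->
    filterlim (fun y => (f y - f x) / (y - x))
      (within (fun y => lo <= y <= hi /\ y <> x) (locally x))
      (locally (f' x)).

Definition continuous_on_interval (g : R -> R) (lo hi : R) : Prop :=
  forall x, lo <= x <= hi ->
    filterlim g (within (fun y => lo <= y <= hi) (locally x)) (locally (g x)).

Definition C1_on (f f' : R -> R) (lo hi : R) : Prop :=
  has_derivative_on f f' lo hi /\ continuous_on_interval f' lo hi.

Definition strictly_increasing_on (f : R -> R) (lo hi : R) : Prop :=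
  forall x y, lo <= x <= hi -> lo <= y <= hi -> x < y -> f x < f y.

(* Main.v *)
Require Import Defs.
From Stdlib Require Import Reals Lra Classical.
From Coquelicot Require Import Coquelicot.
Open Scope R_scope.


Definition DD (a x : R) := fun y => 0 <= y <= a /\ y <> x.

Lemma proper_w (a x : R) : 0 < a -> 0 <= x <= a -> forall e, 0 < e ->
  exists y, DD a x y /\ Rabs (y - x) < e.
Proof.
  intros Ha Hx e He. unfold DD.
  destruct (Rlt_or_le x a) as [Hl|Hl].
  - exists (x + Rmin (e/2) (a - x)).
    assert (0 < Rmin (e/2) (a-x)) by (apply Rmin_glb_lt; lra).
    assert (Rmin (e/2) (a-x) <= e/2) by apply Rmin_l.
    assert (Rmin (e/2) (a-x) <= a - x) by apply Rmin_r.
    replace (x + Rmin (e / 2) (a - x) - x) with (Rmin (e/2) (a-x)) by ring.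
    rewrite Rabs_right by lra. repeat split; lra.
  - exists (x - Rmin (e/2) a).
    assert (0 < Rmin (e/2) a) by (apply Rmin_glb_lt; lra).
    assert (Rmin (e/2) a <= e/2) by apply Rmin_l.
    assert (Rmin (e/2) a <= a) by apply Rmin_r.
    replace (x - Rmin (e / 2) a - x) with (-Rmin (e/2) a) by ring.
    rewrite Rabs_Ropp, Rabs_right by lra. repeat split; lra.
Qed.

Lemma within_get (a x : R) (P : R -> Prop) :
  within (DD a x) (locally x) P -> exists d : posreal, forall y, Rabs (y - x) < d -> DD a x y -> P y.
Proof. intros [d Hd]. exists d. intros y Hy. apply Hd. exact Hy. Qed.

Lemma lim_unique_w (a x : R) (g : R -> R) l l' : 0 < a -> 0 <= x <= a ->
  filterlim g (within (DD a x) (locally x)) (locally l) ->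
  filterlim g (within (DD a x) (locally x)) (locally l') -> l = l'.
Proof.
  intros Ha Hx H1 H2. apply NNPP; intro Hne.
  assert (He : 0 < Rabs (l - l') / 2).
  { apply Rdiv_lt_0_compat; [|lra]. apply Rabs_pos_lt. lra. }
  pose (e := mkposreal _ He).
  destruct (within_get _ _ _ (proj1 (filterlim_locally _ _) H1 e)) as [d1 Hd1].
  destruct (within_get _ _ _ (proj1 (filterlim_locally _ _) H2 e)) as [d2 Hd2].
  assert (Hm : 0 < Rmin d1 d2) by (apply Rmin_glb_lt; apply cond_pos).
  destruct (proper_w a x Ha Hx _ Hm) as [y [Hy1 Hy2]].
  assert (Rabs (y - x) < d1) by (eapply Rlt_le_trans; [exact Hy2| apply Rmin_l]).
  assert (Rabs (y - x) < d2) by (eapply Rlt_le_trans; [exact Hy2| apply Rmin_r]).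
  specialize (Hd1 y H Hy1). specialize (Hd2 y H0 Hy1).
  change (Rabs (g y - l) < e) in Hd1. change (Rabs (g y - l') < e) in Hd2.
  simpl in Hd1, Hd2.
  assert (Rabs (l - l') <= Rabs (g y - l) + Rabs (g y - l')).
  { replace (l - l') with (-(g y - l) + (g y - l')) by ring.
    eapply Rle_trans; [apply Rabs_triang|]. rewrite Rabs_Ropp. lra. }
  lra.
Qed.

Lemma lim_ge0_w (a x : R) (g : R -> R) l : 0 < a -> 0 <= x <= a ->
  (forall y, DD a x y -> 0 <= g y) ->
  filterlim g (within (DD a x) (locally x)) (locally l) -> 0 <= l.
Proof.
  intros Ha Hx Hg H1. apply Rnot_lt_le; intro Hl.
  assert (He : 0 < - l) by lra.
  pose (e := mkposreal _ He).
  destruct (within_get _ _ _ (proj1 (filterlim_locally _ _) H1 e)) as [d1 Hd1].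
  destruct (proper_w a x Ha Hx _ (cond_pos d1)) as [y [Hy1 Hy2]].
  specialize (Hd1 y Hy2 Hy1). change (Rabs (g y - l) < e) in Hd1. simpl in Hd1.
  specialize (Hg y Hy1). apply Rabs_def2 in Hd1. lra.
Qed.

Lemma cont_of_deriv (f f' : R -> R) (a x : R) : 0 < a -> has_derivative_on f f' 0 a -> 0 <= x <= a ->
  forall eps, 0 < eps -> exists d, 0 < d /\ forall y, 0 <= y <= a -> Rabs (y - x) < d -> Rabs (f y - f x) < eps.
Proof.
  intros Ha Hd Hx eps Heps.
  assert (H1 : 0 < 1) by lra.
  destruct (within_get _ _ _ (proj1 (filterlim_locally _ _) (Hd x Hx) (mkposreal _ H1))) as [d1 Hd1].
  set (K := Rabs (f' x) + 1).
  assert (HK : 0 < K) by (unfold K; pose proof (Rabs_pos (f' x)); lra).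
  exists (Rmin d1 (eps / K)). split.
  { apply Rmin_glb_lt; [apply cond_pos| apply Rdiv_lt_0_compat; lra]. }
  intros y Hy Hyx.
  destruct (Req_dec y x) as [->|Hne].
  { replace (f x - f x) with 0 by ring. rewrite Rabs_R0. lra. }
  assert (Rabs (y - x) < d1) by (eapply Rlt_le_trans; [exact Hyx| apply Rmin_l]).
  assert (Hq : Rabs (y - x) < eps / K) by (eapply Rlt_le_trans; [exact Hyx| apply Rmin_r]).
  specialize (Hd1 y H (conj Hy Hne)). change (Rabs ((f y - f x)/(y - x) - f' x) < 1) in Hd1.
  assert (Hq2 : Rabs ((f y - f x) / (y - x)) <= K).
  { unfold K. replace ((f y - f x) / (y - x)) with (((f y - f x)/(y-x) - f' x) + f' x) by ring.
    eapply Rle_trans; [apply Rabs_triang|]. lra. }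
  replace (f y - f x) with ((f y - f x) / (y - x) * (y - x)) by (field; lra).
  rewrite Rabs_mult.
  assert (Hp : 0 < Rabs (y - x)) by (apply Rabs_pos_lt; lra).
  apply Rle_lt_trans with (K * Rabs (y - x)).
  { apply Rmult_le_compat_r; lra. }
  apply Rmult_lt_reg_r with (/K). apply Rinv_0_lt_compat; lra.
  replace (K * Rabs (y - x) * / K) with (Rabs (y - x)) by (field; lra).
  unfold Rdiv in Hq. lra.
Qed.

Lemma chain (g g' f f' : R -> R) (a : R) : 0 < a ->
  has_derivative_on g g' 0 a -> has_derivative_on f f' 0 a ->
  (forall x, 0 <= x <= a -> 0 <= f x <= a) ->
  (forall x y, 0 <= x <= a -> 0 <= y <= a -> f x = f y -> x = y) ->
  has_derivative_on (fun x => g (f x)) (fun x => g' (f x) * f' x) 0 a.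
Proof.
  intros Ha Hg Hf Hmap Hinj x Hx.
  assert (Hfl : filterlim f (within (DD a x) (locally x)) (within (DD a (f x)) (locally (f x)))).
  { intros P [e He].
    destruct (cont_of_deriv f f' a x Ha Hf Hx e (cond_pos e)) as [d [Hd Hd2]].
    exists (mkposreal d Hd). intros y Hy Hy2. apply He.
    - apply Hd2; [apply Hy2| exact Hy].
    - split; [apply Hmap, Hy2|]. intro E. apply (proj2 Hy2). apply Hinj; auto; apply Hy2. }
  assert (H1 : filterlim (fun y => (g (f y) - g (f x)) / (f y - f x)) (within (DD a x) (locally x)) (locally (g' (f x)))).
  { exact (filterlim_comp _ _ _ f (fun z => (g z - g (f x)) / (z - f x)) _ _ _ Hfl (Hg (f x) (Hmap x Hx))). }
  pose proof (Hf x Hx) as H2.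
  pose proof (filterlim_comp_2 _ _ (fun u v => mult u v) H1 H2 (filterlim_mult _ _)) as H3.
  simpl in H3.
  eapply filterlim_ext_loc; [|exact H3].
  exists (mkposreal 1 Rlt_0_1). intros y _ Hy. simpl.
  assert (f y <> f x). { intro E. apply (proj2 Hy). apply Hinj; auto; apply Hy. }
  destruct Hy as [Hy1 Hy2].
  unfold mult; simpl. field. split; lra.
Qed.

Lemma iterS' (n : nat) f x : iterf (S n) f x = iterf n f (f x).
Proof. revert x; induction n; intros x; simpl; [reflexivity|]. simpl in IHn. rewrite IHn. reflexivity. Qed.

Theorem proposition4
  (a : R) (tau1 tau2 d1 d2 t21 d21 : R -> R) (Dn : nat -> R -> R)
  (ahat sigma : R) (p : R -> R)
  (* 0 < a < 1 *)
  (Ha : 0 < a < 1)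
  (* tau_i : [0,a] -> [0,1], C^1, strictly increasing, tau_i(0)=0, tau_i(a)=1 *)
  (Hmap1 : forall x, 0 <= x <= a -> 0 <= tau1 x <= 1)
  (Hmap2 : forall x, 0 <= x <= a -> 0 <= tau2 x <= 1)
  (HC1 : C1_on tau1 d1 0 a) (HC2 : C1_on tau2 d2 0 a)
  (Hinc1 : strictly_increasing_on tau1 0 a)
  (Hinc2 : strictly_increasing_on tau2 0 a)
  (H10 : tau1 0 = 0) (H1a : tau1 a = 1)
  (H20 : tau2 0 = 0) (H2a : tau2 a = 1)
  (Hle1 : forall x, 0 <= x <= a -> tau1 x <= x / a)
  (Hge2 : forall x, 0 <= x <= a -> tau2 x >= x / a)
  (* t21 = tau2^{-1} o tau1 on [0,a] *)
  (H21map : forall x, 0 <= x <= a -> 0 <= t21 x <= a)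
  (H21def : forall x, 0 <= x <= a -> tau2 (t21 x) = tau1 x)
  (HC21 : C1_on t21 d21 0 a)
  (H21lt : forall x, 0 < x < a -> t21 x < x)
  (* 0 < ahat < a, sigma < 1, t21' <= sigma on [0,ahat] *)
  (Hahat : 0 < ahat < a) (Hsigma : sigma < 1)
  (Hd21 : forall x, 0 <= x <= ahat -> d21 x <= sigma)
  (* p is a bounded solution of ( * ) on [0,ahat] *)
  (Hpbd : exists M, forall x, 0 <= x <= ahat -> Rabs (p x) <= M)
  (Hpeq : forall x, 0 <= x <= ahat ->
     p x = p (t21 x) * d21 x - (d21 x - a * d1 x))
  (* Dn n is the derivative of the n-th iterate t21^n on [0,a] *)
  (HDn : forall n, has_derivative_on (iterf n t21) (Dn n) 0 a) :
  exists q : R -> R,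
    (forall x, 0 <= x <= ahat -> q x = p x) /\
    (forall x, 0 <= x < a -> q x = q (t21 x) * d21 x - (d21 x - a * d1 x)) /\
    (forall q' : R -> R,
       (forall x, 0 <= x <= ahat -> q' x = p x) ->
       (forall x, 0 <= x < a -> q' x = q' (t21 x) * d21 x - (d21 x - a * d1 x)) ->
       forall x, 0 <= x < a -> q' x = q x) /\
    (forall x, 0 <= x < a ->
       is_series (fun n => (a * d1 (iterf n t21 x) - d21 (iterf n t21 x)) * Dn n x)
                 (q x)).
Proof.
  destruct HC21 as [Hd21d _].
  assert (Ha0 : 0 < a) by lra.
  set (t := t21) in *.
  assert (Ht0 : t 0 = 0).
  { assert (H0 := H21map 0 ltac:(lra)).
    destruct (Req_dec (t 0) 0) as [E|E]; auto.
    assert (tau2 0 < tau2 (t 0)) by (apply Hinc2; lra).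
    rewrite H21def in H by lra. lra. }
  assert (Htinc : forall x y, 0 <= x <= a -> 0 <= y <= a -> x < y -> t x < t y).
  { intros x y Hx Hy Hxy. apply Rnot_le_lt; intro Hc.
    destruct (Rle_lt_or_eq_dec _ _ Hc) as [Hc'|Hc'].
    - assert (tau2 (t y) < tau2 (t x)) by (apply Hinc2; auto).
      rewrite !H21def in H by auto. assert (tau1 x < tau1 y) by (apply Hinc1; auto). lra.
    - assert (tau1 x < tau1 y) by (apply Hinc1; auto).
      rewrite <- !H21def in H by auto. rewrite Hc' in H. lra. }
  assert (Htinj : forall x y, 0 <= x <= a -> 0 <= y <= a -> t x = t y -> x = y).
  { intros x y Hx Hy E. destruct (Rtotal_order x y) as [L|[L|L]]; auto.
    - specialize (Htinc x y Hx Hy L). lra.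
    - specialize (Htinc y x Hy Hx L). lra. }
  assert (Htle : forall x, 0 <= x < a -> t x <= x).
  { intros x Hx. destruct (Req_dec x 0) as [->|N]; [lra|]. left; apply H21lt; lra. }
  assert (Hdpos : forall x, 0 <= x <= a -> 0 <= d21 x).
  { intros x Hx. apply (lim_ge0_w a x (fun y => (t y - t x) / (y - x)) _ Ha0 Hx); [|exact (Hd21d x Hx)].
    intros y [Hy Hyx]. destruct (Rtotal_order x y) as [L|[L|L]].
    - apply Rlt_le, Rdiv_lt_0_compat; [specialize (Htinc x y Hx Hy L)|]; lra.
    - congruence.
    - replace ((t y - t x) / (y - x)) with ((t x - t y) / (x - y)) by (field; lra).
      apply Rlt_le, Rdiv_lt_0_compat; [specialize (Htinc y x Hy Hx L)|]; lra. }
  assert (Hsig0 : 0 <= sigma).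
  { apply Rle_trans with (d21 0); [apply Hdpos; lra| apply Hd21; lra]. }
  assert (Hit : forall n x, 0 <= x <= a -> 0 <= iterf n t x <= a).
  { induction n; intros x Hx; simpl; auto. }
  assert (Hitlt : forall n x, 0 <= x < a -> 0 <= iterf n t x < a).
  { induction n; intros x Hx; simpl; auto. specialize (IHn x Hx).
    pose proof (H21map (iterf n t x) ltac:(lra)). specialize (Htle _ IHn). lra. }
  assert (Hithat : forall n x, 0 <= x <= ahat -> 0 <= iterf n t x <= ahat).
  { induction n; intros x Hx; simpl; auto. specialize (IHn x Hx).
    assert (Hl : 0 <= iterf n t x < a) by lra. specialize (Htle _ Hl). split; [|lra].
    exact (proj1 (H21map (iterf n t x) ltac:(lra))). }
  assert (Dn0 : forall x, 0 <= x <= a -> Dn O x = 1).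
  { intros x Hx. apply (lim_unique_w a x (fun y => (y - x) / (y - x)) _ _ Ha0 Hx (HDn O x Hx)).
    eapply filterlim_ext_loc; [|apply filterlim_const].
    exists (mkposreal 1 Rlt_0_1). intros y _ [Hy Hyx]. field. lra. }
  assert (DnS : forall n x, 0 <= x <= a -> Dn (S n) x = Dn n (t x) * d21 x).
  { intros n x Hx.
    pose proof (chain (iterf n t) (Dn n) t d21 a Ha0 (HDn n) Hd21d H21map Htinj x Hx) as Hc.
    apply (lim_unique_w a x (fun y => (iterf (S n) t y - iterf (S n) t x) / (y - x)) _ _ Ha0 Hx (HDn (S n) x Hx)).
    eapply filterlim_ext; [|exact Hc]. intros y. simpl. change (iterf n t (t y)) with (iterf n t (t y)). rewrite <- !iterS'. reflexivity. }
  assert (DnS' : forall n x, 0 <= x <= a -> Dn (S n) x = d21 (iterf n t x) * Dn n x).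
  { induction n; intros x Hx.
    - rewrite DnS, !Dn0 by auto. simpl. ring.
    - rewrite DnS by auto. rewrite IHn by auto. rewrite DnS by auto.
      rewrite <- iterS'. simpl. ring. }
  set (term := fun x n => (a * d1 (iterf n t x) - d21 (iterf n t x)) * Dn n x).
  assert (Hstep : forall x s, 0 <= x <= a -> is_series (term (t x)) s ->
            is_series (term x) (a * d1 x - d21 x + d21 x * s)).
  { intros x s Hx Hs. apply is_series_decr_1.
    assert (E : term x O = a * d1 x - d21 x) by (unfold term; simpl; rewrite Dn0 by auto; ring).
    rewrite E.
    match goal with |- is_series _ ?v => replace v with (scal (d21 x) s)
      by (unfold plus, opp, scal; simpl; unfold mult; simpl; ring) end.
    eapply is_series_ext; [|apply (is_series_scal_l (d21 x) _ _ Hs)].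
    intros n. unfold term, scal; simpl; unfold mult; simpl. rewrite DnS by auto.
    rewrite <- iterS'. simpl. ring. }
  assert (Hbd : forall n x, 0 <= x <= ahat -> 0 <= Dn n x <= sigma ^ n).
  { induction n; intros x Hx.
    - rewrite Dn0 by lra. simpl; lra.
    - rewrite DnS by lra. simpl.
      assert (Htx : 0 <= t x <= ahat) by exact (Hithat 1%nat x Hx).
      specialize (IHn _ Htx). assert (0 <= d21 x) by (apply Hdpos; lra).
      specialize (Hd21 x Hx). split; [apply Rmult_le_pos; lra|].
      rewrite Rmult_comm. apply Rmult_le_compat; lra. }
  assert (Hrep : forall n x, 0 <= x <= ahat ->
            p x = sum_n (term x) n + Dn (S n) x * p (iterf (S n) t x)).
  { induction n; intros x Hx.
    - rewrite sum_O. unfold term. rewrite DnS' by lra. simpl. rewrite Dn0 by lra.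
      rewrite Hpeq at 1 by lra. ring.
    - rewrite sum_Sn. rewrite (IHn x Hx).
      set (y := iterf (S n) t x).
      assert (Hy : 0 <= y <= ahat) by exact (Hithat (S n) x Hx).
      rewrite (Hpeq y Hy). unfold term, plus; simpl.
      rewrite (DnS' (S n) x) by lra. simpl. change (t (iterf n t x)) with y. ring. }
  destruct Hpbd as [M HM].
  assert (HM0 : 0 <= M) by (eapply Rle_trans; [apply Rabs_pos| apply (HM 0); lra]).
  assert (Hlow : forall x, 0 <= x <= ahat -> is_series (term x) (p x)).
  { intros x Hx.
    assert (Hg : is_lim_seq (fun n => M * (sigma * sigma ^ n)) 0).
    { replace (Finite 0) with (Rbar_mult M (Rbar_mult sigma 0)) by (simpl; f_equal; ring).
      apply is_lim_seq_scal_l. apply is_lim_seq_scal_l. apply is_lim_seq_geom.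
      rewrite Rabs_right; lra. }
    change (is_lim_seq (sum_n (term x)) (p x)). apply (is_lim_seq_le_le (fun n => p x - M * (sigma * sigma ^ n)) _ (fun n => p x + M * (sigma * sigma ^ n))).
    - intros n. rewrite (Hrep n x Hx) at 1 2.
      assert (Hr : Rabs (Dn (S n) x * p (iterf (S n) t x)) <= M * (sigma * sigma ^ n)).
      { rewrite Rabs_mult. specialize (Hbd (S n) x Hx). simpl in Hbd.
        rewrite (Rabs_right (Dn (S n) x)) by lra. rewrite Rmult_comm.
        apply Rmult_le_compat; try lra; [apply Rabs_pos| apply HM, Hithat, Hx]. }
      revert Hr; unfold Rabs; destruct Rcase_abs; intros; lra.
    - replace (Finite (p x)) with (Finite (p x - 0)) by (f_equal; ring). apply is_lim_seq_minus'; [apply is_lim_seq_const| exact Hg].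
    - replace (Finite (p x)) with (Finite (p x + 0)) by (f_equal; ring). apply is_lim_seq_plus'; [apply is_lim_seq_const| exact Hg]. }
  assert (HN : forall x, 0 <= x < a -> exists N, iterf N t x <= ahat).
  { intros x Hx. apply NNPP; intro Hno.
    assert (Hall : forall n, ahat < iterf n t x).
    { intro n. apply Rnot_le_lt. intro Hc. apply Hno. exists n. exact Hc. }
    set (E := fun y => exists n, y = - iterf n t x).
    assert (HbE : bound E).
    { exists (- ahat). intros y [n ->]. specialize (Hall n). lra. }
    assert (HnE : exists y, E y) by (exists (- x); exists O; reflexivity).
    destruct (completeness E HbE HnE) as [m [Hub Hlub]].
    set (L := - m).
    assert (HL1 : forall n, L <= iterf n t x).
    { intro n. unfold L. assert (E (- iterf n t x)) by (exists n; reflexivity).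
      specialize (Hub _ H). lra. }
    assert (HLa : ahat <= L).
    { unfold L. assert (m <= - ahat).
      { apply Hlub. intros y [n ->]. specialize (Hall n). lra. } lra. }
    assert (HLx : L < a) by (specialize (HL1 O); simpl in HL1; lra).
    assert (HtL : t L < L) by (apply H21lt; lra).
    destruct (cont_of_deriv t d21 a L Ha0 Hd21d ltac:(lra) (L - t L) ltac:(lra)) as [d [Hd Hd2]].
    assert (Hex : exists n, iterf n t x < L + d).
    { apply NNPP; intro Hc.
      assert (m <= m - d).
      { apply Hlub. intros y [n ->]. apply Rnot_lt_le. intro Hc2. apply Hc. exists n.
        unfold L. lra. } lra. }
    destruct Hex as [n Hn].
    pose proof (Hit n x ltac:(lra)) as Hin.
    specialize (Hd2 (iterf n t x) Hin).
    assert (Rabs (iterf n t x - L) < d).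
    { specialize (HL1 n). rewrite Rabs_right; lra. }
    specialize (Hd2 H). specialize (HL1 (S n)). simpl in HL1.
    revert Hd2; unfold Rabs; destruct Rcase_abs; intros; lra. }
  assert (Hconv : forall N x, 0 <= x < a -> iterf N t x <= ahat -> exists s, is_series (term x) s).
  { induction N; intros x Hx HNx.
    - simpl in HNx. exists (p x). apply Hlow. lra.
    - rewrite iterS' in HNx.
      assert (Htx : 0 <= t x < a) by exact (Hitlt 1%nat x Hx).
      destruct (IHN _ Htx HNx) as [s Hs].
      exists (a * d1 x - d21 x + d21 x * s). apply Hstep; [lra| exact Hs]. }
  assert (Hcv : forall x, 0 <= x < a -> is_series (term x) (Series (term x))).
  { intros x Hx. destruct (HN x Hx) as [N HNx]. destruct (Hconv N x Hx HNx) as [s Hs].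
    apply Series_correct. exists s. exact Hs. }
  exists (fun x => Series (term x)).
  assert (Heq : forall x, 0 <= x < a ->
     Series (term x) = Series (term (t x)) * d21 x - (d21 x - a * d1 x)).
  { intros x Hx. assert (Htx : 0 <= t x < a) by exact (Hitlt 1%nat x Hx).
    pose proof (Hstep x _ ltac:(lra) (Hcv _ Htx)) as H.
    rewrite (is_series_unique _ _ H). ring. }
  split; [|split; [|split]].
  - intros x Hx. apply is_series_unique, Hlow, Hx.
  - exact Heq.
  - intros q' Hq1 Hq2.
    assert (Hind : forall N x, 0 <= x < a -> iterf N t x <= ahat -> q' x = Series (term x)).
    { induction N; intros x Hx HNx.
      - simpl in HNx. rewrite Hq1 by lra. symmetry. apply is_series_unique, Hlow. lra.
      - rewrite iterS' in HNx.
        assert (Htx : 0 <= t x < a) by exact (Hitlt 1%nat x Hx).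
        rewrite Hq2 by exact Hx. rewrite Heq by exact Hx. rewrite (IHN _ Htx HNx). reflexivity. }
    intros x Hx. destruct (HN x Hx) as [N HNx]. exact (Hind N x Hx HNx).
  - exact Hcv.
Qed.
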